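(* Let $A\in\mathbb{R}^{n\times n}$, $B\in\mathbb{R}^{n\times m}$, $C\in\mathbb{R}^{p\times n}$, $D\in\mathbb{R}^{p\times m}$ define the discrete-time LTI system $x(t+1)=Ax(t)+Bu(t)$, $y(t)=Cx(t)+Du(t)$, and let $\mathscr{B}$ denote its behaviour. Assume that this input/output/state representation is minimal (so $n=\mathbf{n}(\mathscr{B})$) and that $\mathscr{B}$ is controllable. Let $N,T_{\mathrm{ini}},T\in\mathbb{Z}_{>0}$ with $T_{\mathrm{ini}}\ge \boldsymbol{\ell}(\mathscr{B})$ and $T\ge (m+1)(T_{\mathrm{ini}}+N+\mathbf{n}(\mathscr{B}))-1$. Let $\mathrm{col}(u_{\mathrm{ini}},y_{\mathrm{ini}})\in\mathscr{B}_{T_{\mathrm{ini}}}$ be the $T_{\mathrm{ini}}$ most recent input/output measurements of the system. Let $\mathrm{col}(u^{\mathrm d},y^{\mathrm d})\in\mathscr{B}_T$ be input/output data of the system with $u^{\mathrm d}$ persistently exciting of order $T_{\mathrm{ini}}+N+\mathbf{n}(\mathscr{B})$, and let $U_{\mathrm p},U_{\mathrm f},Y_{\mathrm p},Y_{\mathrm f}$ be built from this data as described in the context. Let $\mathcal{U}\subseteq\mathbb{R}^m$, $\mathcal{Y}\subseteq\mathbb{R}^p$. Then there exists a state estimate $\hat x(t)\in\mathbb{R}^n$ such that the feasible set of the MPC problem $$\text{(MPC)}\quad x_{k+1}=Ax_k+Bu_k,\; y_k=Cx_k+Du_k\ (k=0,\dots,N-1),\; x_0=\hat x(t),\; u_k\in\mathcal{U},\;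 y_k\in\mathcal{Y}\ (k=0,\dots,N-1)$$ in the decision variables $u=(u_0,\dots,u_{N-1})$, $x=(x_0,\dots,x_N)$, $y=(y_0,\dots,y_{N-1})$, is equal to the feasible set of the DeePC problem $$\text{(DeePC)}\quad \begin{pmatrix}U_{\mathrm p}\\ Y_{\mathrm p}\\ U_{\mathrm f}\\ Y_{\mathrm f}\end{pmatrix} g=\begin{pmatrix}u_{\mathrm{ini}}\\ y_{\mathrm{ini}}\\ u\\ y\end{pmatrix},\; u_k\in\mathcal{U},\; y_k\in\mathcal{Y}\ (k=0,\dots,N-1)$$ in the decision variables $g\in\mathbb{R}^{T-T_{\mathrm{ini}}-N+1}$, $u\in\mathbb{R}^{Nm}$, $y\in\mathbb{R}^{Np}$, where the feasible sets are compared as sets of pairs $(u,y)\in\mathcal{U}^N\times\mathcal{Y}^N$.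
   Context: Behaviour: for the system above, $\mathscr{B}=\{\mathrm{col}(u,y)\in(\mathbb{R}^{m+p})^{\mathbb{Z}_{\ge0}}:\exists x\in(\mathbb{R}^n)^{\mathbb{Z}_{\ge0}},\ x(t+1)=Ax(t)+Bu(t),\ y(t)=Cx(t)+Du(t)\}$. For $T\in\mathbb{Z}_{>0}$, $\mathscr{B}_T$ is the set of length-$T$ windows $(w_1,\dots,w_T)$ of trajectories $w\in\mathscr{B}$; elements are written $\mathrm{col}(u,y)$ with $u$ the stacked inputs and $y$ the stacked outputs. $\mathbf{n}(\mathscr{B})$ is the smallest state dimension of an input/output/state representation of $\mathscr{B}$ (a representation of this dimension is called minimal). The lag $\boldsymbol{\ell}(\mathscr{B})$ is the smallest $\ell\in\mathbb{Z}_{>0}$ such that $\mathrm{col}(C,CA,\dots,CA^{\ell-1})$ has rank $\mathbf{n}(\mathscr{B})$ (for a minimal representation). $\mathscr{B}$ is controllable if for every $T$, every $w^1\in\mathscr{B}_T$ and every $w^2\in\mathscr{B}$ there exist $w\in\mathscr{B}$ and $T'\in\mathbb{Z}_{>0}$ with $w_t=w^1_t$ for $1\le t\le T$ and $w_t=w^2_{t-T-T'}$ for $t>T+T'$. For a sequence $u=\mathrm{col}(u_1,\dots,u_T)\in\mathbb{R}^{Tm}$ and $L\le T$, the block Hankel matrix $\mathscr{H}_L(u)$ has block columns $\mathrm{col}(u_j,u_{j+1},\dots,u_{j+L-1})$, $j=1,\dots,T-L+1$; $u$ is persistently exciting of order $L$ if $\mathscr{H}_L(u)$ has full row rank. Data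 matrices: $\mathrm{col}(U_{\mathrm p},U_{\mathrm f})=\mathscr{H}_{T_{\mathrm{ini}}+N}(u^{\mathrm d})$ and $\mathrm{col}(Y_{\mathrm p},Y_{\mathrm f})=\mathscr{H}_{T_{\mathrm{ini}}+N}(y^{\mathrm d})$, where $U_{\mathrm p}$ (resp. $Y_{\mathrm p}$) consists of the first $T_{\mathrm{ini}}$ block rows and $U_{\mathrm f}$ (resp. $Y_{\mathrm f}$) of the last $N$ block rows. $\mathcal{U}^N$ denotes the $N$-fold Cartesian product of $\mathcal{U}$ (similarly $\mathcal{Y}^N$). *)

(* Defs.v *)
From HB Require Import structures.
From mathcomp Require Import all_boot all_order all_algebra.
From mathcomp Require Import reals.
Set Implicit Arguments. Unset Strict Implicit. Unset Printing Implicit Defensive.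
Import Order.TTheory GRing.Theory Num.Theory.
Local Open Scope ring_scope.

Section LTI.
Variable R : realType.

Definition behaviour {n m p : nat} (A : 'M[R]_n) (B : 'M[R]_(n, m))
    (C : 'M[R]_(p, n)) (D : 'M[R]_(p, m))
    (u : nat -> 'cV[R]_m) (y : nat -> 'cV[R]_p) : Prop :=
  exists x : nat -> 'cV[R]_n,
    forall t, x t.+1 = A *m x t + B *m u t /\ y t = C *m x t + D *m u t.

(* B_T : length-T windows (w(0),...,w(T-1)) of trajectories of B. *)
Definition in_window {n m p : nat} (A : 'M[R]_n) (B : 'M[R]_(n, m))
    (C : 'M[R]_(p, n)) (D : 'M[R]_(p, m)) (T : nat)
    (uw : 'I_T -> 'cV[R]_m) (yw : 'I_T -> 'cV[R]_p) : Prop :=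
  exists u y, behaviour A B C D u y /\ forall t : 'I_T, uw t = u t /\ yw t = y t.

(* The representation (A,B,C,D) is minimal: its state dimension n equals n(B),
   the smallest state dimension of any i/o/s representation of the same behaviour. *)
Definition minimal_repr {n m p : nat} (A : 'M[R]_n) (B : 'M[R]_(n, m))
    (C : 'M[R]_(p, n)) (D : 'M[R]_(p, m)) : Prop :=
  forall (n' : nat) (A' : 'M[R]_n') (B' : 'M[R]_(n', m))
         (C' : 'M[R]_(p, n')) (D' : 'M[R]_(p, m)),
    (forall u y, behaviour A' B' C' D' u y <-> behaviour A B C D u y) ->
    (n <= n')%N.

Definition controllable {n m p : nat} (A : 'M[R]_n) (B : 'M[R]_(n, m))
    (C : 'M[R]_(p, n)) (D : 'M[R]_(p, m)) : Prop :=
  forall (T : nat) (u1 : 'I_T -> 'cV[R]_m) (y1 : 'I_T -> 'cV[R]_p),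
    in_window A B C D u1 y1 ->
  forall u2 y2, behaviour A B C D u2 y2 ->
  exists u y (T' : nat), (0 < T')%N /\ behaviour A B C D u y /\
    (forall t : 'I_T, u t = u1 t /\ y t = y1 t) /\
    (forall t : nat, u (t + T + T')%N = u2 t /\ y (t + T + T')%N = y2 t).

Definition obsv_mx {n p : nat} (A : 'M[R]_n) (C : 'M[R]_(p, n)) (l : nat) :=
  \mxcol_(k < l) (C *m A ^+ k).

(* l is the lag: the smallest l > 0 with rank obsv_mx l = n (= n(B), the
   representation being minimal). *)
Definition is_lag {n p : nat} (A : 'M[R]_n) (C : 'M[R]_(p, n)) (l : nat) : Prop :=
  (0 < l)%N /\ \rank (obsv_mx A C l) = n /\
  forall l', (0 < l')%N -> (l' < l)%N -> \rank (obsv_mx A C l') <> n.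

Definition stack {k L : nat} (w : 'I_L -> 'cV[R]_k) : 'cV[R]_(L * k) :=
  (mxvec (\matrix_(i < L, a < k) w i a 0))^T.

(* Reading a finite sequence at a natural index (0 outside the range). *)
Definition at_nat {k T : nat} (w : 'I_T -> 'cV[R]_k) (t : nat) : 'cV[R]_k :=
  match insub t with Some i => w i | None => 0 end.

Definition hankel_rows {k T : nat} (w : 'I_T -> 'cV[R]_k) (s L ncols : nat)
  : 'M[R]_(L * k, ncols) :=
  \matrix_(r, j) (stack (fun i : 'I_L => at_nat w (s + i + j)%N)) r 0.

Definition hankel {k T : nat} (w : 'I_T -> 'cV[R]_k) (L : nat)
  : 'M[R]_(L * k, T.+1 - L) := hankel_rows w 0 L (T.+1 - L).

Definition persistently_exciting {k T : nat} (w : 'I_T -> 'cV[R]_k) (L : nat) :=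
  row_free (hankel w L).

Definition mpc_feasible {n m p : nat} (A : 'M[R]_n) (B : 'M[R]_(n, m))
    (C : 'M[R]_(p, n)) (D : 'M[R]_(p, m)) (N : nat)
    (Uset : 'cV[R]_m -> Prop) (Yset : 'cV[R]_p -> Prop) (xhat : 'cV[R]_n)
    (u : 'I_N -> 'cV[R]_m) (y : 'I_N -> 'cV[R]_p) : Prop :=
  exists x : nat -> 'cV[R]_n, x 0%N = xhat /\
    forall k : 'I_N, x k.+1 = A *m x k + B *m u k /\ y k = C *m x k + D *m u k
                     /\ Uset (u k) /\ Yset (y k).

Definition deepc_feasible {m p : nat} (T Tini N : nat)
    (ud : 'I_T -> 'cV[R]_m) (yd : 'I_T -> 'cV[R]_p)
    (uini : 'I_Tini -> 'cV[R]_m) (yini : 'I_Tini -> 'cV[R]_p)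
    (Uset : 'cV[R]_m -> Prop) (Yset : 'cV[R]_p -> Prop)
    (u : 'I_N -> 'cV[R]_m) (y : 'I_N -> 'cV[R]_p) : Prop :=
  let ncols := (T.+1 - (Tini + N))%N in
  exists g : 'cV[R]_ncols,
    hankel_rows ud 0 Tini ncols *m g = stack uini /\
    hankel_rows yd 0 Tini ncols *m g = stack yini /\
    hankel_rows ud Tini N ncols *m g = stack u /\
    hankel_rows yd Tini N ncols *m g = stack y /\
    forall k : 'I_N, Uset (u k) /\ Yset (y k).

End LTI.

(* Main.v *)
Require Import Defs.
From HB Require Import structures.
From mathcomp Require Import all_boot all_order all_algebra.
From mathcomp Require Import reals.
From mathcomp Require Import zify.
Import Order.TTheory GRing.Theory Num.Theory.
Local Open Scope ring_scope.
Set Implicit Arguments. Unset Strict Implicit. Unset Printing Implicit Defensive.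

Lemma CH_rel (R : realType) n (A : 'M[R]_n) :
  exists al : nat -> R, al n = 1 /\ \sum_(k < n.+1) al k *: A ^+ k = 0.
Proof.
case: n A => [|n'] A.
  exists (fun _ => 1); split => //; apply/matrixP => [[]] //.
exists (fun k => (char_poly A)`_k); split.
  have /monicP := char_poly_monic A; rewrite lead_coefE size_char_poly /=.
  by [].
have H := Cayley_Hamilton A.
move: H; set q := char_poly A; rewrite -[X in horner_mx A X]coefK poly_def size_char_poly linear_sum /= => H.
rewrite -[RHS]H; apply: eq_bigr => i _; rewrite linearZ /= rmorphXn /= horner_mx_X //.
Qed.

Lemma stackE (R : realType) k L (w : 'I_L -> 'cV[R]_k) i a :
  stack w (mxvec_index i a) 0 = w i a 0.
Proof. by rewrite /stack mxE mxvecE mxE. Qed.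

Lemma stack_inj (R : realType) k L (w1 w2 : 'I_L -> 'cV[R]_k) :
  stack w1 = stack w2 -> forall i, w1 i = w2 i.
Proof.
move=> /matrixP E i; apply/matrixP => a j; rewrite (ord1 j).
by have := E (mxvec_index i a) 0; rewrite !stackE.
Qed.

Lemma eq_stack (R : realType) k L (w1 w2 : 'I_L -> 'cV[R]_k) :
  (forall i, w1 i = w2 i) -> stack w1 = stack w2.
Proof.
move=> E; apply/matrixP => r c; rewrite (ord1 c).
by case/mxvec_indexP: r => i a; rewrite !stackE E.
Qed.

Lemma stack_mul (R : realType) k L nc (F : 'I_nc -> 'I_L -> 'cV[R]_k) (g : 'cV[R]_nc) :
  (\matrix_(r, j) (stack (F j)) r 0) *m g =
  stack (fun i => \sum_(j < nc) g j 0 *: F j i).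
Proof.
apply/matrixP => r c; rewrite (ord1 c); case/mxvec_indexP: r => i a.
rewrite !mxE mxvecE mxE summxE; apply: eq_bigr => j _.
by rewrite !mxE mxvecE mxE mulrC.
Qed.

Lemma hankel_mul (R : realType) k T (w : 'I_T -> 'cV[R]_k) s L nc (g : 'cV[R]_nc) :
  hankel_rows w s L nc *m g =
  stack (fun i : 'I_L => \sum_(j < nc) g j 0 *: at_nat w (s + i + j)).
Proof. by rewrite /hankel_rows stack_mul. Qed.

Definition blk (R : realType) k L (E : 'rV[R]_(L * k)) (i : 'I_L) : 'rV[R]_k :=
  \row_a E 0 (mxvec_index i a).

Lemma blk_stack (R : realType) k L (E : 'rV[R]_(L * k)) (w : 'I_L -> 'cV[R]_k) :
  E *m stack w = \sum_i blk E i *m w i.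
Proof.
apply/matrixP => r c; rewrite (ord1 r) (ord1 c) !mxE summxE.
rewrite (reindex _ (curry_mxvec_bij _ _)) /=.
under [RHS]eq_bigr do rewrite mxE.
rewrite pair_bigA /=; apply: eq_bigr => -[i a] _ /=.
by rewrite stackE !mxE.

Qed.

Lemma blk0 (R : realType) k L (E : 'rV[R]_(L * k)) :
  (forall i, blk E i = 0) -> E = 0.
Proof.
move=> H; apply/rowP => r; case/mxvec_indexP: r => i a.
by have /rowP/(_ a) := H i; rewrite !mxE.
Qed.

Lemma blk_ex (R : realType) k L (z : 'I_L -> 'rV[R]_k) :
  exists E : 'rV[R]_(L * k), forall i, blk E i = z i.
Proof.
exists (mxvec (\matrix_(i, a) z i 0 a)) => i; apply/rowP => a.
by rewrite !mxE mxvecE mxE.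
Qed.

Lemma col_stackmx (R : realType) k L nc (F : 'I_nc -> 'I_L -> 'cV[R]_k) j :
  col j (\matrix_(r, j) (stack (F j)) r 0) = stack (F j).
Proof. by apply/matrixP => r c; rewrite (ord1 c) !mxE. Qed.

Lemma row_free_stack (R : realType) k L nc (F : 'I_nc -> 'I_L -> 'cV[R]_k) :
  row_free (\matrix_(r, j) (stack (F j)) r 0) ->
  forall z : 'I_L -> 'rV[R]_k, (forall j, \sum_i z i *m F j i = 0) -> forall i, z i = 0.
Proof.
move=> Hf z Hz i; have [E HE] := blk_ex z.
suff E0 : E = 0 by rewrite -HE E0; apply/rowP => a; rewrite !mxE.
apply: (row_free_inj Hf); rewrite mul0mx; apply/matrixP => r j; rewrite (ord1 r).
have -> : (E *m \matrix_(r, j) (stack (F j)) r 0) 0 j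
    = (E *m col j (\matrix_(r, j) (stack (F j)) r 0)) 0 0.
  by rewrite !mxE; apply: eq_bigr => r1 _; rewrite !mxE.
rewrite col_stackmx blk_stack.
under eq_bigr do rewrite HE.
by rewrite Hz !mxE.
Qed.

Lemma ker_rank (R : realType) r n (M : 'M[R]_(r, n)) :
  \rank M = n <-> (forall z : 'cV[R]_n, M *m z = 0 -> z = 0).
Proof.
split.
  move=> Hr z Hz; have Hf : row_free M^T by rewrite /row_free mxrank_tr Hr.
  have : z^T *m M^T = 0 *m M^T by rewrite -trmx_mul Hz trmx0 mul0mx.
  by move/(row_free_inj Hf)/(congr1 trmx); rewrite trmxK trmx0.
move=> H; rewrite -mxrank_tr; apply/eqP; apply: inj_row_free => v Hv.
have : M *m v^T = 0 by rewrite -[M]trmxK -trmx_mul Hv trmx0.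
by move/H/(congr1 trmx); rewrite trmxK trmx0.
Qed.

Lemma obsv_ker (R : realType) n p (A : 'M[R]_n) (C : 'M[R]_(p, n)) l (z : 'cV[R]_n) :
  obsv_mx A C l *m z = 0 <-> (forall k : 'I_l, C *m A ^+ k *m z = 0).
Proof.
rewrite /obsv_mx mxcol_mul -(@mxcol0 R l (fun _ => p) 1).
by split => [/eq_mxcolP|H]; last apply/eq_mxcolP.
Qed.

Lemma obs_rank (R : realType) n p (A : 'M[R]_n) (C : 'M[R]_(p, n)) l :
  \rank (obsv_mx A C l) = n <->
  (forall z : 'cV[R]_n, (forall k : 'I_l, C *m A ^+ k *m z = 0) -> z = 0).
Proof.
rewrite ker_rank; split => H z Hz; apply: H; exact/obsv_ker.
Qed.

Definition Wsp (R : realType) n p (A : 'M[R]_n) (C : 'M[R]_(p, n)) l : 'M[R]_n :=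
  (\sum_(k < l) <<C *m A ^+ k>>)%MS.

Lemma Wsup (R : realType) n p (A : 'M[R]_n) (C : 'M[R]_(p, n)) l (k : 'I_l) :
  (C *m A ^+ k <= Wsp A C l)%MS.
Proof. by apply: (sumsmx_sup k) => //; rewrite genmxE. Qed.

Lemma Wker (R : realType) n p (A : 'M[R]_n) (C : 'M[R]_(p, n)) l (z : 'cV[R]_n) :
  Wsp A C l *m z = 0 <-> (forall k : 'I_l, C *m A ^+ k *m z = 0).
Proof.
split.
  move=> Hz k; have /submxP[E ->] := Wsup A C k.
  by rewrite -mulmxA Hz mulmx0.
move=> H; have /sub_sumsmxP[u_ ->] : (Wsp A C l <= Wsp A C l)%MS by [].
rewrite mulmx_suml big1 // => k _.
have /submxP[E ->] : (<<C *m A ^+ k>> <= C *m A ^+ k)%MS by rewrite genmxE.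
by rewrite -!mulmxA (mulmxA C) H !mulmx0.
Qed.

Lemma Wmono (R : realType) n p (A : 'M[R]_n) (C : 'M[R]_(p, n)) l :
  (Wsp A C l <= Wsp A C l.+1)%MS.
Proof. by rewrite /Wsp big_ord_recr /= addsmxSl. Qed.

Lemma Wstab (R : realType) n p (A : 'M[R]_n) (C : 'M[R]_(p, n)) :
  exists l, (Wsp A C l.+1 <= Wsp A C l)%MS.
Proof.
have [/existsP [l Hl] | /existsPn H] :=
  boolP [exists l : 'I_n.+1, \rank (Wsp A C l.+1) <= \rank (Wsp A C l)]%N.
  exists l; have := mxrank_leqif_sup (Wmono A C l).
  by case => _ <-; rewrite eqn_leq Hl mxrankS // Wmono.
have Hi : forall l, (l <= n.+1)%N -> (l <= \rank (Wsp A C l))%N.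
  elim => // l IH Hl; have := H (Ordinal Hl); rewrite -ltnNge /= => Hlt.
  exact: leq_ltn_trans (IH (ltnW Hl)) Hlt.
by have := Hi _ (leqnn _); rewrite leqNgt ltnS rank_leq_col.
Qed.

Lemma min_obs (R : realType) n m p (A : 'M[R]_n) (B : 'M[R]_(n, m))
    (C : 'M[R]_(p, n)) (D : 'M[R]_(p, m)) :
  minimal_repr A B C D ->
  exists l, (0 < l)%N /\
    forall z : 'cV[R]_n, (forall k : 'I_l, C *m A ^+ k *m z = 0) -> z = 0.
Proof.
move=> Hmin; have [l Hsub] := Wstab A C.
set W := Wsp A C l.
have CW : (C <= W)%MS.
  apply: submx_trans Hsub.
  by have := Wsup A C (ord0 : 'I_l.+1); rewrite /= expr0 mulmx1.
have AW : (W *m A <= W)%MS.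
  rewrite /W /Wsp sumsmxMr_gen; apply/sumsmx_subP => k _; rewrite genmxE.
  apply: submx_trans Hsub.
  apply: submx_trans (Wsup A C (lift ord0 k)).
  rewrite lift0 exprSr mulmxA.
  by apply: submxMr; rewrite genmxE.
set S := row_base W.
have CS : (C <= S)%MS by rewrite eq_row_base.
have AS : (S *m A <= S)%MS.
  apply: submx_trans (submxMr A (_ : (S <= W)%MS)) _; first by rewrite eq_row_base.
  by rewrite eq_row_base.
have [Sr HSr] := row_freeP (row_base_free W).
set A' := S *m A *m pinvmx S.
have HA' : A' *m S = S *m A := mulmxKpV AS.
set C' := C *m pinvmx S.
have HC' : C' *m S = C := mulmxKpV CS.
have Hle := Hmin _ A' (S *m B) C' D.
have Hr : (n <= \rank W)%N.
  apply: Hle => u y; split => [[x' Hx'] | [x Hx]].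
    pose x := fix f (t : nat) : 'cV[R]_n :=
      if t is t'.+1 then A *m f t' + B *m u t' else Sr *m x' 0%N.
    have Sx : forall t, S *m x t = x' t.
      elim => [|t IH]; first by rewrite /= mulmxA HSr mul1mx.
      rewrite /= (Hx' t).1 mulmxDr !mulmxA -HA' -IH !mulmxA.
      by [].
    exists x => t; split => //.
    by rewrite (Hx' t).2 -Sx mulmxA HC'.
  exists (fun t => S *m x t) => t; split.
    by rewrite (Hx t).1 mulmxDr (mulmxA S A) (mulmxA A' S) HA' (mulmxA S B).
  by rewrite (Hx t).2 (mulmxA C' S) HC'.
have HrW : \rank W = n by apply/eqP; rewrite eqn_leq rank_leq_col Hr.
have Wk := proj1 (ker_rank W) HrW.
exists l.+1; split => // z Hz; apply: Wk; apply/Wker => k.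
exact: (Hz (widen_ord (leqnSn l) k)).
Qed.

Lemma obsT (R : realType) n m p (A : 'M[R]_n) (B : 'M[R]_(n, m))
    (C : 'M[R]_(p, n)) (D : 'M[R]_(p, m)) Tini :
  minimal_repr A B C D -> (forall l, is_lag A C l -> (l <= Tini)%N) ->
  forall z : 'cV[R]_n, (forall k : 'I_Tini, C *m A ^+ k *m z = 0) -> z = 0.
Proof.
move=> Hmin Hlag; have [l0 [l0pos Hl0]] := min_obs Hmin.
pose P l := (0 < l)%N && (\rank (obsv_mx A C l) == n).
have P0 : P l0 by rewrite /P l0pos; apply/eqP/obs_rank.
case: (ex_minnP (ex_intro P l0 P0)) => l1 /andP[l1pos /eqP Hr1] minl1.
have Hlag1 : is_lag A C l1.
  split => //; split => // l' l'pos l'lt Hr'.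
  have : P l' by rewrite /P l'pos Hr' eqxx.
  by move/minl1; rewrite leqNgt l'lt.
have l1le := Hlag _ Hlag1.
move=> z Hz; apply: (proj1 (obs_rank A C l1) Hr1) => k.
exact: (Hz (widen_ord l1le k)).
Qed.

Lemma rowv0 (R : realType) n (xi : 'rV[R]_n) :
  (forall x : 'cV[R]_n, xi *m x = 0) -> xi = 0.
Proof.
move=> H; apply/rowP => a; have := H (delta_mx a 0).
by rewrite -colE => /matrixP/(_ 0 0); rewrite !mxE.
Qed.

Lemma reach (R : realType) n m p (A : 'M[R]_n) (B : 'M[R]_(n, m))
    (C : 'M[R]_(p, n)) (D : 'M[R]_(p, m)) Tini :
  (forall z : 'cV[R]_n, (forall k : 'I_Tini, C *m A ^+ k *m z = 0) -> z = 0) ->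
  controllable A B C D ->
  forall xi : 'rV[R]_n, (forall i, xi *m A ^+ i *m B = 0) -> xi = 0.
Proof.
move=> Hobs Hc xi Hxi; apply: rowv0 => x2.
have W1 : in_window A B C D (fun _ : 'I_Tini => 0 : 'cV[R]_m) (fun _ => 0 : 'cV[R]_p).
  exists (fun _ => 0), (fun _ => 0); split => [|//]; exists (fun _ => 0) => t.
  by rewrite !mulmx0 !addr0; split.
have B2 : behaviour A B C D (fun _ => 0) (fun t => C *m (A ^+ t *m x2)).
  exists (fun t => A ^+ t *m x2) => t; rewrite !mulmx0 !addr0; split => //.
  by rewrite exprS -mulmxE mulmxA.
have [u [y [T' [T'pos [[z Hz] [H1 H2]]]]]] := Hc _ _ _ W1 _ _ B2.
(* zero input on [0, Tini) *)
have Hz0 : forall t, (t <= Tini)%N -> z t = A ^+ t *m z 0%N.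
  elim => [|t IH] Ht; first by rewrite expr0 mul1mx.
  have Hu : u t = 0 by have := (H1 (Ordinal Ht)).1.
  by rewrite (Hz t).1 Hu mulmx0 addr0 IH ?(ltnW Ht) // exprS -mulmxE mulmxA.
have z00 : z 0%N = 0.
  apply: Hobs => k; have := (H1 k).2; rewrite (Hz k).2 (H1 k).1 mulmx0 addr0.
  by rewrite Hz0 ?(ltnW (ltn_ord k)) // mulmxA.
have zT : z Tini = 0 by rewrite Hz0 // z00 mulmx0.
have Hz2 : forall s, z (s + Tini + T')%N = A ^+ s *m z (Tini + T')%N.
  elim => [|s IH]; first by rewrite expr0 mul1mx add0n.
  rewrite !addSn (Hz _).1 (H2 s).1 mulmx0 addr0 IH.
  by rewrite exprS -mulmxE mulmxA.
have zx2 : z (Tini + T')%N = x2.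
  apply/eqP; rewrite -subr_eq0; apply/eqP; apply: Hobs => k.
  have := (H2 k).2; rewrite (Hz _).2 (H2 k).1 mulmx0 addr0 Hz2 => E.
  by rewrite !mulmxBr -!mulmxA E subrr.
suff : forall k j, xi *m A ^+ j *m z (Tini + k)%N = 0.
  by move/(_ T' 0%N); rewrite expr0 mulmx1 zx2.
elim => [|k IH] j; first by rewrite addn0 zT mulmx0.
have eA : forall j', A ^+ j' *m A = A ^+ j'.+1 by move=> j'; rewrite exprSr.
rewrite addnS (Hz _).1 mulmxDr !mulmxA -(mulmxA xi) eA IH add0r.
by rewrite Hxi mul0mx.
Qed.

Lemma FL_core (R : realType) n m (A : 'M[R]_n) (B : 'M[R]_(n, m))
    (x : nat -> 'cV[R]_n) (u : nat -> 'cV[R]_m) L nc :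
  (forall t, x t.+1 = A *m x t + B *m u t) ->
  (forall xi : 'rV[R]_n, (forall i, xi *m A ^+ i *m B = 0) -> xi = 0) ->
  (forall zeta : 'I_(L + n) -> 'rV[R]_m,
      (forall j, (j < nc - n)%N -> \sum_(i < L + n) zeta i *m u (i + j)%N = 0) ->
      forall i, zeta i = 0) ->
  forall (xi : 'rV[R]_n) (eta : nat -> 'rV[R]_m),
   (forall j, (j < nc)%N -> xi *m x j + \sum_(i < L) eta i *m u (i + j)%N = 0) ->
   xi = 0 /\ forall i, (i < L)%N -> eta i = 0.
Proof.
move=> Hx Hreach HPE xi eta Hrel.
pose c b : 'rV[R]_m := if (b < n)%N then xi *m A ^+ (n.-1 - b) *m B
  else if (b < n + L)%N then eta (b - n)%N else 0.
have Hc0 : forall b, (n + L <= b)%N -> c b = 0.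
  move=> b Hb; rewrite /c ifF; last by apply/negbTE; rewrite -leqNgt; lia.
  by rewrite ifF //; apply/negbTE; rewrite -leqNgt.
have RK : forall k, (k <= n)%N -> forall j, (j + k < nc)%N ->
    xi *m A ^+ k *m x j + \sum_(0 <= b < L + n) c (b + n - k)%N *m u (b + j)%N = 0.
  elim => [|k IH] Hk j Hj.
    rewrite expr0 mulmx1 -[RHS](Hrel j); last by rewrite -(addn0 j).
    congr (_ + _).
    rewrite big_mkord (big_ord_widen (L + n) (fun b => eta b *m u (b + j)%N)) ?leq_addr //.
    rewrite [RHS]big_mkcond; apply: eq_bigr => b _ /=.
    rewrite subn0 /c ifF; last by apply/negbTE; rewrite -leqNgt leq_addl.
    by rewrite [(n + L)%N]addnC ltn_add2r addnK; case: ifP => //; rewrite mul0mx.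
  have := IH (ltnW Hk) j.+1 ltac:(lia).
  have [K' eK] : exists K', (L + n = K'.+1)%N by exists (L + n).-1; lia.
  rewrite eK big_nat_recr //= big_nat_recl //= (Hc0 (K' + n - k)%N); last by lia.
  rewrite mul0mx addr0 (Hx j) mulmxDr !mulmxA => E; rewrite -[RHS]E.
  have eA : A ^+ k *m A = A ^+ k.+1 by rewrite exprSr.
  rewrite -(mulmxA xi (A ^+ k) A) eA -addrA; congr (_ + _).
  have -> : c (0 + n - k.+1)%N = xi *m A ^+ k *m B.
    rewrite /c ifT; last by lia.
    by have -> : (n.-1 - (0 + n - k.+1) = k)%N by lia.
  rewrite add0n -mulmxA; congr (_ + _); apply: eq_bigr => b _.
  have -> : (b.+1 + n - k.+1 = b + n - k)%N by lia.
  by rewrite addSnnS.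
have [al [aln Hal]] := CH_rel A.
pose zeta (b : 'I_(L + n)) := \sum_(k < n.+1) al k *: c (b + n - k)%N.
have Hz : forall i, zeta i = 0.
  apply: HPE => j Hj.
  have E : \sum_(k < n.+1) al k *: (xi *m A ^+ k *m x j +
      \sum_(0 <= b < L + n) c (b + n - k)%N *m u (b + j)%N) = 0.
    apply: big1 => k _; move: (ltn_ord k) => Hk; rewrite RK ?scaler0 //; lia.
  rewrite -[RHS]E; under [RHS]eq_bigr do rewrite scalerDr.
  rewrite big_split /=.
  have -> : \sum_(k < n.+1) al k *: (xi *m A ^+ k *m x j) = 0.
    transitivity (xi *m (\sum_(k < n.+1) al k *: A ^+ k) *m x j); last first.
      by rewrite Hal mulmx0 mul0mx.
    rewrite mulmx_sumr mulmx_suml.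
    by apply: eq_bigr => k _; rewrite -scalemxAr scalemxAl.
  rewrite add0r; under [RHS]eq_bigr do rewrite scaler_sumr.
  rewrite exchange_big /= big_mkord; apply: eq_bigr => b _.
  by rewrite /zeta mulmx_suml; apply: eq_bigr => k _; rewrite scalemxAl.
have Hdown : forall d b, (n + L <= b + d)%N -> c b = 0.
  elim => [|d IH] b Hb; first by apply: Hc0; rewrite -(addn0 b).
  have [Hb'|Hb'] := leqP (n + L) (b + d); first exact: IH.
  have Hbl : (b < L + n)%N by lia.
  have := Hz (Ordinal Hbl); rewrite /zeta big_ord_recr /= aln scale1r addnK.
  rewrite big1 ?add0r // => k _.
  by rewrite IH ?scaler0 //; have := ltn_ord k; lia.
have Hc : forall b, c b = 0 by move=> b; apply: (Hdown (n + L)%N); lia.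
have Heta : forall i, (i < L)%N -> eta i = 0.
  move=> i Hi; have := Hc (n + i)%N; rewrite /c ifF; last by apply/negbTE; lia.
  by rewrite ifT ?addKn //; lia.
split => //; apply: Hreach.
have Hlow : forall i, (i < n)%N -> xi *m A ^+ i *m B = 0.
  move=> i Hi; have := Hc (n.-1 - i)%N; rewrite /c ifT; last by lia.
  by have -> : (n.-1 - (n.-1 - i) = i)%N by lia.
elim/ltn_ind => i IH.
have [Hi|Hi] := ltnP i n; first exact: Hlow.
have : xi *m A ^+ (i - n) *m (\sum_(k < n.+1) al k *: A ^+ k) *m B = 0.
  by rewrite Hal mulmx0 mul0mx.
rewrite mulmx_sumr mulmx_suml big_ord_recr /= aln scale1r.
have eA : forall a b, A ^+ a *m A ^+ b = A ^+ (a + b) by move=> a b; rewrite exprD.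
rewrite -(mulmxA xi) eA subnK // big1 ?add0r // => k _.
rewrite -scalemxAr -(mulmxA xi) eA -scalemxAl IH ?scaler0 //.
have := ltn_ord k; lia.
Qed.

Lemma FL_surj (R : realType) n m (A : 'M[R]_n) (B : 'M[R]_(n, m))
    (x : nat -> 'cV[R]_n) (u : nat -> 'cV[R]_m) L nc :
  (forall t, x t.+1 = A *m x t + B *m u t) ->
  (forall xi : 'rV[R]_n, (forall i, xi *m A ^+ i *m B = 0) -> xi = 0) ->
  (forall zeta : 'I_(L + n) -> 'rV[R]_m,
      (forall j, (j < nc - n)%N -> \sum_(i < L + n) zeta i *m u (i + j)%N = 0) ->
      forall i, zeta i = 0) ->
  forall (x0 : 'cV[R]_n) (v : 'I_L -> 'cV[R]_m), exists g : 'cV[R]_nc,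
    \sum_(j < nc) g j 0 *: x j = x0 /\
    forall i : 'I_L, \sum_(j < nc) g j 0 *: u (i + j)%N = v i.
Proof.
move=> Hx Hreach HPE x0 v.
pose X : 'M[R]_(n, nc) := \matrix_(a, j) x j a 0.
pose H : 'M[R]_(L * m, nc) := \matrix_(r, j) (stack (fun i : 'I_L => u (i + j)%N)) r 0.
pose M := col_mx X H.
have Mf : row_free M.
  apply: inj_row_free => w Hw.
  rewrite -(hsubmxK w) mul_row_col in Hw; rewrite -(hsubmxK w).
  set xi := lsubmx w in Hw *; set E := rsubmx w in Hw *.
  have Hj : forall j : 'I_nc, xi *m x j + \sum_i blk E i *m u (i + j)%N = 0.
    move=> j; have := congr1 (col j) Hw; rewrite col0 !colE mulmxDl -!mulmxA.
    rewrite -!colE col_stackmx blk_stack.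
    have -> : col j X = x j by apply/matrixP => a b; rewrite (ord1 b) !mxE.
    by [].
  pose eta i := if insub i is Some o then blk E o else 0 : 'rV[R]_m.
  have etaE : forall o : 'I_L, eta o = blk E o by move=> o; rewrite /eta valK.
  have Hrel : forall j, (j < nc)%N ->
      xi *m x j + \sum_(i < L) eta i *m u (i + j)%N = 0.
    move=> j Hj'; rewrite -[RHS](Hj (Ordinal Hj')); congr (_ + _).
    by apply: eq_bigr => i _; rewrite etaE.
  have [xi0 eta0] := FL_core Hx Hreach HPE Hrel.
  have E0 : E = 0.
    by apply: blk0 => i; rewrite -etaE eta0.
  by rewrite xi0 E0 row_mx0.
have [g Hg] : exists g, M *m g = col_mx x0 (stack v).
  have Mt : row_full M^T by rewrite /row_full mxrank_tr.
  have /submxP[D HD] := submx_full (col_mx x0 (stack v))^T Mt.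
  by exists D^T; rewrite -[M]trmxK -trmx_mul -HD trmxK.
rewrite mul_col_mx in Hg; case/eq_col_mx: Hg => HX HH.
exists g; split.
  rewrite -HX; apply/matrixP => a b; rewrite (ord1 b) !mxE summxE.
  by apply: eq_bigr => j _; rewrite !mxE mulrC.
move=> i; rewrite /H stack_mul in HH; exact: (stack_inj HH i).
Qed.

Lemma at_natE (R : realType) k T (w : 'I_T -> 'cV[R]_k) t (Ht : (t < T)%N) :
  at_nat w t = w (Ordinal Ht).
Proof. by rewrite /at_nat insubT. Qed.

Lemma hk (R : realType) k T (w : 'I_T -> 'cV[R]_k) (wd : nat -> 'cV[R]_k)
    s L nc (g : 'cV[R]_nc) :
  (forall t : 'I_T, w t = wd t) -> (s + L + nc <= T.+1)%N ->
  hankel_rows w s L nc *m g =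
  stack (fun i : 'I_L => \sum_(j < nc) g j 0 *: wd (s + i + j)%N).
Proof.
move=> Hw Hb; rewrite hankel_mul; apply: eq_stack => i; apply: eq_bigr => j _.
have Ht : (s + i + j < T)%N by have := ltn_ord i; have := ltn_ord j; lia.
by rewrite (at_natE _ Ht) Hw.
Qed.

Lemma lincomb (R : realType) n m p (A : 'M[R]_n) (B : 'M[R]_(n, m))
    (C : 'M[R]_(p, n)) (D : 'M[R]_(p, m)) (x : nat -> 'cV[R]_n) (u : nat -> 'cV[R]_m)
    (y : nat -> 'cV[R]_p) nc (g : 'cV[R]_nc) :
  (forall t, x t.+1 = A *m x t + B *m u t /\ y t = C *m x t + D *m u t) ->
  forall t,
   \sum_(j < nc) g j 0 *: x (t.+1 + j)%N =
     A *m (\sum_(j < nc) g j 0 *: x (t + j)%N) + B *m (\sum_(j < nc) g j 0 *: u (t + j)%N) /\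
   \sum_(j < nc) g j 0 *: y (t + j)%N =
     C *m (\sum_(j < nc) g j 0 *: x (t + j)%N) + D *m (\sum_(j < nc) g j 0 *: u (t + j)%N).
Proof.
move=> H t; rewrite !mulmx_sumr -!big_split /=; split; apply: eq_bigr => j _.
  by rewrite addSn (H _).1 scalerDr !scalemxAr.
by rewrite (H _).2 scalerDr !scalemxAr.
Qed.

Lemma same_traj (R : realType) n m (A : 'M[R]_n) (B : 'M[R]_(n, m))
    (z x : nat -> 'cV[R]_n) (uz ux : nat -> 'cV[R]_m) K :
  (forall t, (t < K)%N -> z t.+1 = A *m z t + B *m uz t) ->
  (forall t, (t < K)%N -> x t.+1 = A *m x t + B *m ux t) ->
  z 0%N = x 0%N -> (forall t, (t < K)%N -> uz t = ux t) ->
  forall t, (t <= K)%N -> z t = x t.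
Proof.
move=> Hz Hx H0 Hu; elim => // t IH Ht.
by rewrite Hz // Hx // IH ?(ltnW Ht) // Hu.
Qed.

Lemma obs_match (R : realType) n m p (A : 'M[R]_n) (B : 'M[R]_(n, m))
    (C : 'M[R]_(p, n)) (D : 'M[R]_(p, m)) Tini
    (z x : nat -> 'cV[R]_n) (uz ux : nat -> 'cV[R]_m) (yz yx : nat -> 'cV[R]_p) :
  (forall w : 'cV[R]_n, (forall k : 'I_Tini, C *m A ^+ k *m w = 0) -> w = 0) ->
  (forall t, z t.+1 = A *m z t + B *m uz t /\ yz t = C *m z t + D *m uz t) ->
  (forall t, x t.+1 = A *m x t + B *m ux t /\ yx t = C *m x t + D *m ux t) ->
  (forall t, (t < Tini)%N -> uz t = ux t /\ yz t = yx t) ->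
  z 0%N = x 0%N.
Proof.
move=> Hobs Hz Hx Heq; apply/eqP; rewrite -subr_eq0; apply/eqP; apply: Hobs => k.
have Hw : forall t, (t <= Tini)%N -> z t - x t = A ^+ t *m (z 0%N - x 0%N).
  elim => [|t IH] Ht; first by rewrite expr0 mul1mx.
  rewrite (Hz t).1 (Hx t).1 (Heq t Ht).1.
  have -> : A *m z t + B *m ux t - (A *m x t + B *m ux t) = A *m (z t - x t).
    by rewrite mulmxBr opprD addrACA subrr addr0.
  by rewrite IH ?(ltnW Ht) // mulmxA exprS.
have := (Heq k (ltn_ord k)).2; rewrite (Hz k).2 (Hx k).2 (Heq k (ltn_ord k)).1.
move/eqP; rewrite -subr_eq0 opprD addrACA subrr addr0 -mulmxBr.
by rewrite Hw ?(ltnW (ltn_ord k)) // mulmxA => /eqP.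
Qed.

Theorem theorem1 (R : realType) (n m p : nat)
    (A : 'M[R]_n) (B : 'M[R]_(n, m)) (C : 'M[R]_(p, n)) (D : 'M[R]_(p, m))
    (N Tini T : nat)
    (uini : 'I_Tini -> 'cV[R]_m) (yini : 'I_Tini -> 'cV[R]_p)
    (ud : 'I_T -> 'cV[R]_m) (yd : 'I_T -> 'cV[R]_p)
    (Uset : 'cV[R]_m -> Prop) (Yset : 'cV[R]_p -> Prop) :
  minimal_repr A B C D ->
  controllable A B C D ->
  (0 < N)%N -> (0 < Tini)%N -> (0 < T)%N ->
  (forall l, is_lag A C l -> (l <= Tini)%N) ->
  ((m + 1) * (Tini + N + n) - 1 <= T)%N ->
  in_window A B C D uini yini ->
  in_window A B C D ud yd ->
  persistently_exciting ud (Tini + N + n) ->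
  exists xhat : 'cV[R]_n,
    forall (u : 'I_N -> 'cV[R]_m) (y : 'I_N -> 'cV[R]_p),
      mpc_feasible A B C D Uset Yset xhat u y <->
      deepc_feasible ud yd uini yini Uset Yset u y.
Proof.
move=> Hmin Hctrl HN HTini HT Hlag HTb [ui [yi [[xs Hxs] Hwi]]]
  [u_d [y_d [[xd Hxd] Hwd]]] HPE.
have Hobs := obsT Hmin Hlag.
have Hreach := reach Hobs Hctrl.
have HLn : (Tini + N + n <= T.+1)%N by nia.
set L := (Tini + N)%N in HPE HLn *.
set nc := (T.+1 - L)%N.
have HPE' : forall zeta : 'I_(L + n) -> 'rV[R]_m,
    (forall j, (j < nc - n)%N -> \sum_(i < L + n) zeta i *m u_d (i + j)%N = 0) ->
    forall i, zeta i = 0.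
  move=> zeta Hz; apply: (row_free_stack HPE) => j.
  have Hj : (j < nc - n)%N by have := ltn_ord j; rewrite /nc; lia.
  rewrite -[RHS](Hz j Hj); apply: eq_bigr => i _.
  have Ht : (0 + i + j < T)%N by have := ltn_ord i; lia.
  by rewrite (at_natE _ Ht) (Hwd (Ordinal Ht)).1.
have Hxd1 : forall t, xd t.+1 = A *m xd t + B *m u_d t by move=> t; exact: (Hxd t).1.
have FL := FL_surj Hxd1 Hreach HPE'.
have HbT : (0 + Tini + nc <= T.+1)%N by rewrite /nc; lia.
have HbN : (Tini + N + nc <= T.+1)%N by rewrite /nc; lia.
have Hu_d : forall t : 'I_T, ud t = u_d t by move=> t; exact: (Hwd t).1.
have Hy_d : forall t : 'I_T, yd t = y_d t by move=> t; exact: (Hwd t).2.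
have Hxs1 : forall t, xs t.+1 = A *m xs t + B *m ui t by move=> t; exact: (Hxs t).1.
exists (xs Tini) => u y; split.
- case=> xm [Hxm0 Hxm].
  pose v (i : 'I_L) := if (i < Tini)%N then ui i else at_nat u (i - Tini).
  have [g [Hg0 Hgu]] := FL (xs 0%N) v.
  pose z t := \sum_(j < nc) g j 0 *: xd (t + j)%N.
  pose uz t := \sum_(j < nc) g j 0 *: u_d (t + j)%N.
  pose yz t := \sum_(j < nc) g j 0 *: y_d (t + j)%N.
  have HZ : forall t, z t.+1 = A *m z t + B *m uz t /\ yz t = C *m z t + D *m uz t.
    exact: lincomb.
  have Euz : forall t, (t < L)%N ->
      uz t = if (t < Tini)%N then ui t else at_nat u (t - Tini).
    by move=> t Ht; rewrite /uz (Hgu (Ordinal Ht)).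
  have Hz0 : z 0%N = xs 0%N by rewrite -Hg0; apply: eq_bigr => j _; rewrite add0n.
  have Hzx : forall t, (t <= Tini)%N -> z t = xs t.
    apply: (same_traj (B := B) (uz := uz) (ux := ui)) => //.
    - by move=> t _; exact: (HZ t).1.
    - by move=> t Ht; rewrite Euz ?Ht //; rewrite /L; lia.
  have Hyz : forall t, (t < Tini)%N -> yz t = yi t.
    move=> t Ht; rewrite (HZ t).2 (Hxs t).2 Hzx ?(ltnW Ht) // Euz ?Ht //.
    by rewrite /L; lia.
  have Euz2 : forall k, (k < N)%N -> uz (Tini + k)%N = at_nat u k.
    move=> k Hk; rewrite Euz; last by rewrite /L; lia.
    by rewrite ifF ?addKn //; apply/negbTE; rewrite -leqNgt leq_addr.
  have Hzm : forall k, (k <= N)%N -> z (Tini + k)%N = xm k.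
    apply: (same_traj (B := B) (uz := fun k => uz (Tini + k)%N) (ux := at_nat u)).
    - by move=> t _; rewrite addnS; exact: (HZ _).1.
    - by move=> t Ht; rewrite (Hxm (Ordinal Ht)).1 (at_natE _ Ht).
    - by rewrite addn0 Hzx // Hxm0.
    - exact: Euz2.
  exists g; rewrite /deepc_feasible -/L -/nc; split; [|split; [|split; [|split]]].
  + rewrite (hk _ Hu_d HbT); apply: eq_stack => i.
    rewrite (Hwi i).1; transitivity (uz i); first by apply: eq_bigr => j _; rewrite add0n.
    by rewrite Euz ?ltn_ord //; have := ltn_ord i; rewrite /L; lia.
  + rewrite (hk _ Hy_d HbT); apply: eq_stack => i.
    rewrite (Hwi i).2; transitivity (yz i); first by apply: eq_bigr => j _; rewrite add0n.
    exact: Hyz.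
  + rewrite (hk _ Hu_d HbN); apply: eq_stack => k.
    transitivity (uz (Tini + k)%N) => //.
    by rewrite (Euz2 k (ltn_ord k)) (at_natE _ (ltn_ord k)); congr u; apply: val_inj.
  + rewrite (hk _ Hy_d HbN); apply: eq_stack => k.
    transitivity (yz (Tini + k)%N) => //.
    rewrite (HZ _).2 Hzm ?(ltnW (ltn_ord k)) // Euz2 // (at_natE _ (ltn_ord k)).
    by rewrite (Hxm k).2.1; congr (_ + D *m u _); apply: val_inj.
  + by move=> k; have [_ [_ [Hu Hy]]] := Hxm k.
- case=> g [E1 [E2 [E3 [E4 Hc]]]].
  pose z t := \sum_(j < nc) g j 0 *: xd (t + j)%N.
  pose uz t := \sum_(j < nc) g j 0 *: u_d (t + j)%N.
  pose yz t := \sum_(j < nc) g j 0 *: y_d (t + j)%N.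
  have HZ : forall t, z t.+1 = A *m z t + B *m uz t /\ yz t = C *m z t + D *m uz t.
    exact: lincomb.
  rewrite (hk _ Hu_d HbT) in E1; rewrite (hk _ Hy_d HbT) in E2.
  rewrite (hk _ Hu_d HbN) in E3; rewrite (hk _ Hy_d HbN) in E4.
  have E1' : forall i : 'I_Tini, uz i = ui i.
    move=> i; rewrite -(Hwi i).1 -(stack_inj E1 i).
    by apply: eq_bigr => j _; rewrite add0n.
  have E2' : forall i : 'I_Tini, yz i = yi i.
    move=> i; rewrite -(Hwi i).2 -(stack_inj E2 i).
    by apply: eq_bigr => j _; rewrite add0n.
  have Hz0 : z 0%N = xs 0%N.
    apply: (obs_match Hobs HZ Hxs) => t Ht.
    by rewrite (E1' (Ordinal Ht)) (E2' (Ordinal Ht)).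
  have Hzx : forall t, (t <= Tini)%N -> z t = xs t.
    apply: (same_traj (B := B) (uz := uz) (ux := ui)) => //.
    - by move=> t _; exact: (HZ t).1.
    - by move=> t Ht; rewrite (E1' (Ordinal Ht)).
  exists (fun k => z (Tini + k)%N); split; first by rewrite addn0 Hzx.
  move=> k; split; [|split; [|exact: Hc]].
  + by rewrite addnS (HZ _).1 -(stack_inj E3 k).
  + by rewrite -(stack_inj E4 k) -(stack_inj E3 k) -(HZ _).2.
Qed.
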